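(* Let $n\ge 3$, $0<m<\frac{n-2}{n}$, $\rho>0$, and let $\alpha,\beta$ satisfy $\alpha=\frac{2\beta+\rho}{1-m}$, $\beta>\frac{m\rho}{n-2-mn}$, and $\alpha>n\beta$. Let $v$ be a radially symmetric solution of $$\frac{n-1}{m}\Delta v^m+\alpha v+\beta x\cdot\nabla v=0,\quad v>0,\quad\text{in }\mathbb{R}^n$$ (equivalently, a solution of the corresponding radial ODE on $(0,\infty)$ with $v(0)=\eta>0$, $v'(0)=0$). Then $$\lim_{r\to\infty}r^{n-2}v(r)^m=\infty.$$
   Context: $v(r)$ denotes the value of the radially symmetric function $v$ at any point with $|x|=r$. *)

(* Defs.v *)
From Stdlib Require Import Reals.
From Coquelicot Require Import Coquelicot.
Open Scope R_scope.

Definition vpow (v : R -> R) (m : R) : R -> R := fun r => Rpower (v r) m.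

(* v is a radially symmetric solution of
     (n-1)/m * Delta (v^m) + alpha v + beta x . grad v = 0,  v > 0  in R^n,
   written as the radial ODE on (0,oo): for w = v^m,
     (n-1)/m * (w'' + (n-1)/r w') + alpha v + beta r v' = 0,
   with v(0) = eta > 0 and v'(0) = 0.  The function v : R -> R is only
   relevant on [0,oo); differentiability at 0 with v'(0)=0 is stated for
   v on R (any solution on [0,oo) extends evenly). *)
Definition radial_solution (n : nat) (m alpha beta eta : R) (v : R -> R) : Prop :=
  (forall r, 0 <= r -> 0 < v r) /\
  v 0 = eta /\
  (forall r, 0 <= r -> ex_derive v r) /\
  Derive v 0 = 0 /\
  (forall r, 0 < r -> ex_derive (vpow v m) r /\ ex_derive (Derive (vpow v m)) r) /\
  (forall r, 0 < r ->
     (INR n - 1) / m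
       * (Derive (Derive (vpow v m)) r + (INR n - 1) / r * Derive (vpow v m) r)
     + alpha * v r + beta * r * Derive v r = 0).

(* Main.v *)
Require Import Defs.
From Stdlib Require Import Reals Lra Lia.
From Coquelicot Require Import Coquelicot.
Open Scope R_scope.

Lemma cont_eps f x : continuity_pt f x -> forall eps, eps > 0 ->
  exists d, d > 0 /\ forall y, Rabs (y - x) < d -> Rabs (f y - f x) < eps.
Proof.
  intros H eps He. destruct (H eps He) as [d [Hd Hy]]. exists d; split; auto.
  intros y Hyx. destruct (Req_dec y x) as [->|Hne].
  - rewrite Rminus_diag, Rabs_R0; lra.
  - apply (Hy y). split. split; [exact I| congruence]. simpl; unfold R_dist; auto.
Qed.

Lemma stays_pos (f df : R -> R) a b : a <= b ->
  (forall x, a <= x <= b -> derivable_pt_lim f x (df x)) ->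
  (forall x, a <= x <= b -> f x = 0 -> df x > 0) -> f a > 0 -> f b > 0.
Proof.
  intros Hab Hd Hz Ha.
  destruct (Rlt_or_le 0 (f b)) as [|Hb]; [auto|exfalso].
  set (E := fun t => a <= t <= b /\ forall s, a <= s <= t -> f s > 0).
  destruct (completeness E) as [c [Hub Hlub]].
  - exists b; intros t [Ht _]; lra.
  - exists a; split; [lra|]; intros s Hs; replace s with a by lra; auto.
  - assert (ac : a <= c) by (apply Hub; split; [lra|]; intros s Hs; replace s with a by lra; auto).
    assert (cb : c <= b) by (apply Hlub; intros t [Ht _]; lra).
    assert (Hbel : forall s, a <= s < c -> f s > 0).
    { intros s Hs. destruct (Rlt_or_le 0 (f s)) as [|Hfs]; auto. exfalso.
      assert (c <= s); [|lra]. apply Hlub. intros t [Ht Ht2].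
      destruct (Rle_or_lt t s); auto. assert (f s > 0) by (apply Ht2; lra). lra. }
    assert (Hc : continuity_pt f c).
    { apply derivable_continuous_pt. exists (df c). apply Hd; lra. }
    destruct (Rtotal_order (f c) 0) as [Hneg|[Hzero|Hpos]].
    + destruct (cont_eps f c Hc (- f c)) as [d [Hd0 Hdd]]; [lra|].
      assert (a < c). { destruct (Req_dec a c) as [<-|]; [lra|lra]. }
      set (s := Rmax a (c - d/2)).
      assert (a <= s < c) by (unfold s; apply Rmax_case_strong; lra).
      assert (f s > 0) by (apply Hbel; auto).
      assert (Rabs (s - c) < d) by (unfold s; apply Rmax_case_strong; intros; rewrite Rabs_left; lra).
      specialize (Hdd s H2). rewrite Rabs_lt_between in Hdd. lra.
    + assert (Hdc : df c > 0) by (apply Hz; lra).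
      assert (a < c). { destruct (Req_dec a c) as [<-|]; [lra|lra]. }
      destruct (Hd c (conj ac cb) (df c) Hdc) as [d Hdd].
      set (h := - Rmin (d/2) ((c - a)/2)).
      assert (Hh : - d/2 <= h < 0 /\ - (c-a)/2 <= h).
      { unfold h. pose proof (cond_pos d). apply Rmin_case_strong; intros; lra. }
      assert (h <> 0) by lra.
      assert (Rabs h < d) by (rewrite Rabs_left; pose proof (cond_pos d); lra).
      specialize (Hdd h H0 H1). rewrite Hzero, Rminus_0_r in Hdd.
      assert (f (c + h) > 0) by (apply Hbel; lra).
      rewrite Rabs_lt_between in Hdd.
      assert (f (c + h) / h < 0).
      { unfold Rdiv. apply Rmult_pos_neg; auto. apply Rinv_lt_0_compat; lra. }
      lra.
    + destruct (cont_eps f c Hc (f c)) as [d [Hd0 Hdd]]; [lra|].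
      assert (c < b). { destruct (Req_dec c b) as [->|]; [lra|lra]. }
      set (t := Rmin b (c + d/2)).
      assert (c < t <= b) by (unfold t; apply Rmin_case_strong; lra).
      assert (E t).
      { split; [lra|]. intros s Hs. destruct (Rlt_or_le s c). apply Hbel; lra.
        assert (Rabs (s - c) < d).
        { rewrite Rabs_right by lra. unfold t in Hs. revert Hs; apply Rmin_case_strong; intros; lra. }
        specialize (Hdd s H2). rewrite Rabs_lt_between in Hdd. lra. }
      specialize (Hub t H1). lra.
Qed.

Theorem lemma3p2 (n : nat) (m rho alpha beta eta : R) (v : R -> R) :
  (3 <= n)%nat ->
  0 < m -> m < (INR n - 2) / INR n ->
  0 < rho ->
  alpha = (2 * beta + rho) / (1 - m) ->
  beta > m * rho / (INR n - 2 - m * INR n) ->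
  alpha > INR n * beta ->
  0 < eta ->
  radial_solution n m alpha beta eta v ->
  is_lim (fun r => r ^ (n - 2) * Rpower (v r) m) p_infty p_infty.
Proof.
  intros Hn Hm Hmn Hrho Halpha Hbeta Hab Heta [Hpos [Hv0 [Hdv [_ [Hdw Hode]]]]].
  destruct n as [|[|[|k]]]; try lia.
  set (N := INR (S (S (S k)))) in *.
  assert (HN : N = INR (S k) + 2) by (unfold N; rewrite !S_INR; ring).
  assert (HSk : INR (S k) >= 1) by (rewrite S_INR; pose proof (pos_INR k); lra).
  assert (HNpos : N > 0) by lra.
  assert (Hd : N - 2 - m * N > 0).
  { apply (Rmult_lt_compat_r N) in Hmn; auto. unfold Rdiv in Hmn.
    rewrite Rmult_assoc, Rinv_l in Hmn by lra. lra. }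
  assert (Hb : beta > 0).
  { assert (0 < m * rho / (N - 2 - m * N)) by (apply Rdiv_lt_0_compat; [apply Rmult_lt_0_compat|]; lra). lra. }
  assert (Hm1 : m < 1) by nra.
  assert (Ha0 : alpha > 0) by nra.
  assert (Hal : alpha * (1 - m) = 2 * beta + rho) by (rewrite Halpha; field; lra).
  assert (Hbd : beta * (N - 2 - m * N) > m * rho).
  { apply (Rmult_lt_compat_r (N - 2 - m*N)) in Hbeta; auto. unfold Rdiv in Hbeta.
    rewrite Rmult_assoc, Rinv_l in Hbeta by lra. lra. }
  assert (Hkey : m * alpha < beta * INR (S k)).
  { assert (m * alpha * (1 - m) < beta * INR (S k) * (1 - m)).
    { replace (m * alpha * (1 - m)) with (m * (alpha * (1 - m))) by ring. rewrite Hal. nra. }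
    apply Rmult_lt_reg_r with (1 - m); lra. }
  set (w := vpow v m) in *.
  assert (Hw1 : forall r, 0 < r -> Derive w r = m * Derive v r / v r * Rpower (v r) m).
  { intros r Hr. apply is_derive_unique. unfold w, vpow, Rpower.
    assert (0 < v r) by (apply Hpos; lra).
    auto_derive. split; [apply Hdv; lra| split; [lra|exact I]].
    change RinvImpl.Rinv with Rinv.
    change (Derive (fun x => v x) r) with (Derive v r).
    field; lra. }
  set (Phi := fun r => (N-1)*alpha*r^(S k)*w r + (N-1)*beta/m * r^(S (S k)) * Derive w r).
  set (dPhi := fun r => (N-1)*alpha*(INR (S k) * r^k * w r + r^(S k) * Derive w r)
     + (N-1)*beta/m*(INR (S (S k)) * r^(S k) * Derive w r + r^(S (S k)) * Derive (Derive w) r)).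
  assert (HdPhi : forall r, 0 < r -> is_derive Phi r (dPhi r)).
  { intros r Hr. destruct (Hdw r Hr) as [E1 E2]. unfold Phi, dPhi. auto_derive.
    - repeat split; auto.
    - change (match k with 0%nat => 1 | S _ => INR k + 1 end) with (INR (S k)).
      rewrite (S_INR (S k)).
      change (Derive (fun x => w x) r) with (Derive w r).
      change (Derive (fun x => Derive w x) r) with (Derive (Derive w) r).
      cbn [pow]. set (rk := r ^ k). field. lra. }
  assert (HPhih : forall r, 0 < r -> Phi r = (N-1) * r^(S k) * (Rpower (v r) m / v r)
        * (alpha * v r + beta * r * Derive v r)).
  { intros r Hr. assert (0 < v r) by (apply Hpos; lra). unfold Phi. rewrite Hw1 by auto.
    unfold w, vpow. cbn [pow]. set (rk := r ^ k). field. lra. }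
  assert (HZ : forall r, 0 < r -> Phi r = 0 -> dPhi r > 0).
  { intros r Hr HP0. assert (Hvr : 0 < v r) by (apply Hpos; lra).
    assert (HP : 0 < Rpower (v r) m) by (unfold Rpower; apply exp_pos).
    assert (Hfac : 0 < (N-1) * r^(S k) * (Rpower (v r) m / v r)).
    { apply Rmult_lt_0_compat; [apply Rmult_lt_0_compat; [lra| apply pow_lt; lra]|].
      apply Rdiv_lt_0_compat; lra. }
    assert (Hh0 : alpha * v r + beta * r * Derive v r = 0).
    { rewrite HPhih in HP0 by auto. destruct (Rmult_integral _ _ HP0); auto. lra. }
    specialize (Hode r Hr). fold w in Hode.
    assert (HD2 : Derive (Derive w) r = - ((N - 1) / r * Derive w r)).
    { assert ((N - 1) / m * (Derive (Derive w) r + (N - 1) / r * Derive w r) = 0) by lra.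
      destruct (Rmult_integral _ _ H) as [H1|H1].
      - exfalso. assert (0 < (N-1)/m) by (apply Rdiv_lt_0_compat; lra). lra.
      - lra. }
    assert (HD1 : Derive w r = - (alpha * m * w r / (beta * r))).
    { unfold Phi in HP0. cbn [pow] in HP0.
      assert (Hrk : 0 < r ^ k) by (apply pow_lt; lra).
      set (rk := r ^ k) in *.
      apply Rmult_eq_reg_l with ((N-1)*beta/m * (r*(r*rk))).
      - transitivity (- ((N-1)*alpha*(r*rk)*w r)); [lra|]. field. lra.
      - assert (0 < (N-1)*beta/m * (r*(r*rk))); [|lra].
        apply Rmult_lt_0_compat; [apply Rdiv_lt_0_compat; [apply Rmult_lt_0_compat|]; lra|repeat apply Rmult_lt_0_compat; lra]. }
    assert (HwP : w r = Rpower (v r) m) by reflexivity.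
    assert (dPhi r = (N-1)*alpha*r^k*w r*(INR (S k) - alpha*m/beta)).
    { unfold dPhi. rewrite HD2, HD1. rewrite (S_INR (S k)), HN. simpl. field. lra. }
    rewrite H. assert (0 < INR (S k) - alpha*m/beta).
    { apply Rlt_Rminus. apply Rmult_lt_reg_r with beta; auto. unfold Rdiv.
      rewrite Rmult_assoc, Rinv_l by lra. lra. }
    rewrite <- HwP in HP.
    assert (0 < r ^ k) by (apply pow_lt; lra).
    repeat apply Rmult_lt_0_compat; lra. }
  assert (Hder : forall c, 0 <= c -> derivable_pt_lim v c (Derive v c)).
  { intros c Hc. apply is_derive_Reals. apply Derive_correct. apply Hdv; auto. }
  assert (Hc0 : continuity_pt v 0).
  { apply derivable_continuous_pt. exists (Derive v 0). apply Hder; lra. }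
  set (eps := alpha * eta / (2 * (alpha + beta))).
  assert (Heps : eps > 0) by (unfold eps; apply Rdiv_lt_0_compat; nra).
  destruct (cont_eps v 0 Hc0 eps Heps) as [del [Hdel Hdd]].
  destruct (MVT_cor2 v (Derive v) 0 (del/2)) as [xi [Hmvt Hxi]]; [lra| intros; apply Hder; lra|].
  assert (Hhxi : alpha * v xi + beta * xi * Derive v xi > 0).
  { assert (H1 : Rabs (v xi - v 0) < eps) by (apply Hdd; rewrite Rabs_right; lra).
    assert (H2 : Rabs (v (del/2) - v 0) < eps) by (apply Hdd; rewrite Rabs_right; lra).
    rewrite Hv0 in H1, H2, Hmvt. rewrite Rabs_lt_between in H1, H2.
    assert (Hx : xi * Derive v xi = (xi / (del/2)) * (v (del/2) - eta)) by (rewrite Hmvt; field; lra).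
    assert (Ht : 0 < xi / (del/2) < 1).
    { split. apply Rdiv_lt_0_compat; lra. apply Rmult_lt_reg_r with (del/2); [lra|].
      unfold Rdiv. rewrite Rmult_assoc, Rinv_l by lra. lra. }
    set (t := xi / (del/2)) in *.
    assert (t * (v (del/2) - eta) > - eps) by nra.
    assert (alpha * eta - (alpha + beta) * eps > 0).
    { unfold eps. field_simplify; [|lra]. apply Rdiv_lt_0_compat; nra. }
    replace (beta * xi * Derive v xi) with (beta * (xi * Derive v xi)) by ring.
    rewrite Hx. nra. }
  assert (HPhixi : Phi xi > 0).
  { rewrite HPhih by lra. assert (Hvr : 0 < v xi) by (apply Hpos; lra).
    assert (HP : 0 < Rpower (v xi) m) by (unfold Rpower; apply exp_pos).
    apply Rmult_lt_0_compat; auto.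
    apply Rmult_lt_0_compat; [apply Rmult_lt_0_compat; [lra| apply pow_lt; lra]|].
    apply Rdiv_lt_0_compat; lra. }
  assert (Hhpos : forall r, xi <= r -> alpha * v r + beta * r * Derive v r > 0).
  { intros r Hr. assert (HPr : Phi r > 0).
    { apply (stays_pos Phi dPhi xi r Hr).
      - intros x Hx. apply is_derive_Reals. apply HdPhi. lra.
      - intros x Hx. apply HZ. lra.
      - auto. }
    rewrite HPhih in HPr by lra.
    assert (Hvr : 0 < v r) by (apply Hpos; lra).
    assert (HP : 0 < Rpower (v r) m) by (unfold Rpower; apply exp_pos).
    assert (Hfac : 0 < (N-1) * r^(S k) * (Rpower (v r) m / v r)).
    { apply Rmult_lt_0_compat; [apply Rmult_lt_0_compat; [lra| apply pow_lt; lra]|].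
      apply Rdiv_lt_0_compat; lra. }
    destruct (Rlt_or_le 0 (alpha * v r + beta * r * Derive v r)); auto.
    exfalso. assert ((N-1) * r^(S k) * (Rpower (v r) m / v r) * (alpha * v r + beta * r * Derive v r) <= 0); [|lra].
    apply Rmult_le_0_l; lra. }
  set (g := fun r => exp (alpha / beta * ln r) * v r).
  assert (Hg : forall r, 0 < r -> derivable_pt_lim g r
             (exp (alpha / beta * ln r) / (beta * r) * (alpha * v r + beta * r * Derive v r))).
  { intros r Hr. apply is_derive_Reals. unfold g. auto_derive.
    - split; [lra|split; [apply Hdv; lra|exact I]].
    - change RinvImpl.Rinv with Rinv.
      change (Derive (fun x => v x) r) with (Derive v r).
      field. lra. }
  assert (Hgm : forall r, xi < r -> g xi <= g r).
  { intros r Hr. destruct (MVT_cor2 g (fun r => exp (alpha / beta * ln r) / (beta * r) * (alpha * v r + beta * r * Derive v r)) xi r Hr) as [c [Hc1 Hc2]].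
    - intros c Hc. apply Hg. lra.
    - assert (0 < exp (alpha / beta * ln c) / (beta * c) * (alpha * v c + beta * c * Derive v c)).
      { apply Rmult_lt_0_compat. apply Rdiv_lt_0_compat. apply exp_pos. nra. apply Hhpos; lra. }
      nra. }
  assert (Hgxi : 0 < g xi) by (unfold g; apply Rmult_lt_0_compat; [apply exp_pos|apply Hpos; lra]).
  set (e := INR (S k) - m * alpha / beta).
  assert (He : e > 0).
  { unfold e. apply Rlt_0_minus. apply Rmult_lt_reg_r with beta; auto. unfold Rdiv.
    rewrite Rmult_assoc, Rinv_l by lra. lra. }
  apply is_lim_spec. intros M. simpl.
  set (M' := Rmax M 1).
  assert (HM' : 1 <= M' /\ M <= M') by (unfold M'; split; [apply Rmax_r|apply Rmax_l]).
  set (L := (ln M' - m * ln (g xi)) / e).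
  exists (Rmax xi (exp L)). intros x Hx.
  assert (Hx1 : xi < x) by (eapply Rle_lt_trans; [apply Rmax_l|exact Hx]).
  assert (Hx2 : exp L < x) by (eapply Rle_lt_trans; [apply Rmax_r|exact Hx]).
  assert (Hx0 : 0 < x) by lra.
  assert (HlnL : L < ln x) by (rewrite <- (ln_exp L); apply ln_increasing; [apply exp_pos|auto]).
  replace (S (S (S k)) - 2)%nat with (S k) by lia.
  assert (Hvx : 0 < v x) by (apply Hpos; lra).
  apply Rle_lt_trans with M'; [lra|]. change (M' < x ^ S k * Rpower (v x) m).
  apply ln_lt_inv; [lra| apply Rmult_lt_0_compat; [apply pow_lt; lra| unfold Rpower; apply exp_pos]|].
  rewrite ln_mult, ln_pow by (try apply pow_lt; try unfold Rpower; try apply exp_pos; lra).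
  unfold Rpower. rewrite ln_exp.
  assert (Hlg : ln (g xi) <= alpha / beta * ln x + ln (v x)).
  { assert (E : ln (g x) = alpha / beta * ln x + ln (v x)).
    { unfold g. rewrite ln_mult; [| apply exp_pos | exact Hvx]. rewrite ln_exp. reflexivity. }
    rewrite <- E. apply ln_le; [exact Hgxi|]. apply Hgm; auto. }
  assert (m * ln (g xi) <= m * (alpha / beta * ln x + ln (v x))) by (apply Rmult_le_compat_l; lra).
  assert (e * L < e * ln x) by (apply Rmult_lt_compat_l; auto).
  assert (e * L = ln M' - m * ln (g xi)) by (unfold L; field; lra).
  assert (e * ln x = INR (S k) * ln x - m * (alpha / beta * ln x)) by (unfold e; field; lra).
  nra.
Qed.
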